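(* Let $c=(c_k)_{k\ge1}$ be a sequence of complex numbers with $c_k\to0$ as $k\to\infty$. Then $$\|T_c\|\le\sum_{k=1}^\infty\sqrt{k(k+1)}\,|c_{k+2}-2c_{k+1}+c_k|.$$
   Context: For a complex sequence $c=(c_k)_{k\ge1}$, $T_c$ is the infinite matrix indexed by $j,k\ge1$ with entries $(T_c)_{jk}=c_k$ if $j=k$, $(T_c)_{jk}=c_k-c_{k-1}$ if $j<k$, and $(T_c)_{jk}=0$ if $j>k$. $\|T_c\|$ denotes its operator norm on $\ell^2$ if it acts boundedly, and $\|T_c\|=\infty$ otherwise. *)

(* Defs.v *)
From HB Require Import structures.
From mathcomp Require Import all_boot all_order all_algebra.
From mathcomp Require Import all_classical all_reals all_analysis.
From mathcomp Require Export complex.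
Export Order.TTheory GRing.Theory Num.Theory numFieldNormedType.Exports.

Set Implicit Arguments.
Unset Strict Implicit.
Unset Printing Implicit Defensive.

Local Open Scope ring_scope.

(* A sequence c = (c_k)_{k>=1} is modelled by [c : nat -> R[i]],
   c_k := c k for k >= 1 (the value c 0 is never used). *)

Definition Tc (R : realType) (c : nat -> R[i]) (j k : nat) : R[i] :=
  if j == k then c k
  else if (j < k)%N then c k - c k.-1
  else 0.

Definition l2norm (R : realType) (N : nat) (x : nat -> R[i]) : R :=
  Num.sqrt (\sum_(1 <= j < N.+1) ComplexField.Normc.normc (x j) ^+ 2).

(* action of T_c on a vector supported on 1..N; the result is again
   supported on 1..N since T_c is upper triangular *)
Definition Tc_apply (R : realType) (c : nat -> R[i]) (N : nat)
  (x : nat -> R[i]) : nat -> R[i] :=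
  fun j => \sum_(1 <= k < N.+1) Tc c j k * x k.

(* This equals the
   operator norm when T_c acts boundedly, and is +oo otherwise. *)
Definition Tc_opnorm (R : realType) (c : nat -> R[i]) : \bar R :=
  ereal_sup [set r : \bar R | exists (N : nat) (x : nat -> R[i]),
     l2norm N x != 0 /\ r = ((l2norm N (Tc_apply c N x)) / l2norm N x)%:E]%classic.

(* Main.v *)
Require Import Defs.
From HB Require Import structures.
From mathcomp Require Import all_boot all_order all_algebra.
From mathcomp Require Import all_classical all_reals all_analysis.
From mathcomp Require Import complex.
From mathcomp Require Import ring lra zify.
From Stdlib Require Import Lia.
Import Order.TTheory GRing.Theory Num.Theory numFieldNormedType.Exports.
Local Open Scope classical_set_scope.
Local Open Scope ring_scope.


Section Helpers.
Variable R : realType.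
Local Notation C := R[i].
Local Open Scope complex_scope.
Local Notation nc := (@ComplexField.Normc.normc R).

Lemma nc_ge0 (z : C) : 0 <= nc z.
Proof. by case: z => a b /=; rewrite sqrtr_ge0. Qed.

Lemma nc_sq (z : C) : nc z ^+ 2 = complex.Re z ^+ 2 + complex.Im z ^+ 2.
Proof. by case: z => a b /=; rewrite sqr_sqrtr // addr_ge0 // sqr_ge0. Qed.

Lemma nc_nat n : nc (n%:R : C) = n%:R.
Proof. by rewrite normcMn ComplexField.Normc.normc1. Qed.

Lemma nc_mul (a b : C) : nc (a * b) = nc a * nc b.
Proof. exact: ComplexField.Normc.normcM. Qed.

Lemma nc_add (a b : C) : nc (a + b) <= nc a + nc b.
Proof. exact: le_normcD. Qed.

Lemma nc_opp (a : C) : nc (- a) = nc a.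
Proof. exact: normcN. Qed.

Lemma nc_sub (a b : C) : nc (a - b) <= nc a + nc b.
Proof. by rewrite -(nc_opp b) nc_add. Qed.

Lemma nc0 : nc 0 = 0.
Proof. exact: ComplexField.Normc.normc0. Qed.

Lemma nc_sum (I : Type) (r : seq I) (F : I -> C) :
  nc (\sum_(i <- r) F i) <= \sum_(i <- r) nc (F i).
Proof.
elim: r => [|a r IH]; first by rewrite !big_nil nc0.
rewrite !big_cons; apply: le_trans (nc_add _ _) _; exact: lerD.
Qed.

Lemma nc_identity (Q : R) (a b : C) :
  nc (((Q + 1)%:C) * a - Q%:C * b) ^+ 2 =
  (Q + 1) * nc a ^+ 2 - Q * nc b ^+ 2 + Q * (Q + 1) * nc (a - b) ^+ 2.
Proof.
rewrite !nc_sq; case: a => a1 a2; case: b => b1 b2 /=.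
ring.
Qed.

Lemma natC n : (n%:R : C) = (n%:R : R)%:C.
Proof. by rewrite rmorph_nat. Qed.

Lemma cs_ineq (I : Type) (r : seq I) (a b : I -> R) :
  (\sum_(i <- r) a i * b i) ^+ 2 <=
  (\sum_(i <- r) a i ^+ 2) * (\sum_(i <- r) b i ^+ 2).
Proof.
set P := \sum_(i <- r) _; set A := \sum_(i <- r) _; set B := \sum_(i <- r) _.
have E1 : A * B = \sum_(i <- r) \sum_(j <- r) a i ^+ 2 * b j ^+ 2.
  by rewrite /A big_distrl; apply: eq_bigr => i _; rewrite big_distrr.
have E3 : A * B = \sum_(i <- r) \sum_(j <- r) a j ^+ 2 * b i ^+ 2.
  by rewrite E1 exchange_big.
have E2 : P ^+ 2 = \sum_(i <- r) \sum_(j <- r) (a i * b i) * (a j * b j).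
  by rewrite expr2 /P big_distrl; apply: eq_bigr => i _; rewrite big_distrr.
have H : 0 <= \sum_(i <- r) \sum_(j <- r) (a i * b j - a j * b i) ^+ 2.
  by apply: sumr_ge0 => i _; apply: sumr_ge0 => j _; apply: sqr_ge0.
have E4 : \sum_(i <- r) \sum_(j <- r) (a i * b j - a j * b i) ^+ 2
   = A * B + A * B - 2 * P ^+ 2.
  rewrite {1}E1 E3 E2 -big_split /= mulr_sumr -sumrB; apply: eq_bigr => i _.
  rewrite -big_split /= mulr_sumr -sumrB; apply: eq_bigr => j _; ring.
rewrite E4 in H.
rewrite -subr_ge0.
have E5 : 2 * (A * B - P ^+ 2) = A * B + A * B - 2 * P ^+ 2 by ring.
by rewrite -E5 pmulr_rge0 in H.
Qed.
Definition ss (N : nat) (y : nat -> C) : R :=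
  \sum_(1 <= j < N.+1) nc (y j) ^+ 2.

Lemma ss_ge0 N (y : nat -> C) : 0 <= ss N y.
Proof. by apply: sumr_ge0 => j _; apply: sqr_ge0. Qed.

Lemma l2E N (y : nat -> C) : l2norm N y = Num.sqrt (ss N y).
Proof. by []. Qed.

Lemma l2_ge0 N (y : nat -> C) : 0 <= l2norm N y.
Proof. exact: sqrtr_ge0. Qed.

Lemma l2_ext N (f g : nat -> C) : (forall j, (1 <= j <= N)%N -> f j = g j) ->
  l2norm N f = l2norm N g.
Proof.
move=> H; rewrite !l2E /ss; congr Num.sqrt.
by apply: eq_big_nat => j /andP[j1 jN]; rewrite H // j1 -ltnS.
Qed.

Lemma l2_scale N (a : C) (f : nat -> C) : l2norm N (fun j => a * f j) = nc a * l2norm N f.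
Proof.
rewrite !l2E /ss.
have -> : \sum_(1 <= j < N.+1) nc (a * f j) ^+ 2 =
          nc a ^+ 2 * \sum_(1 <= j < N.+1) nc (f j) ^+ 2.
  by rewrite mulr_sumr; apply: eq_bigr => j _; rewrite nc_mul exprMn.
rewrite sqrtrM ?sqr_ge0 // sqrtr_sqr ger0_norm //; exact: nc_ge0.
Qed.

Lemma l2_zero N : l2norm N (fun _ => (0 : C)) = 0.
Proof.
rewrite l2E /ss big1 ?sqrtr0 // => j _; by rewrite nc0 expr0n.
Qed.

Lemma l2_add N (f g : nat -> C) :
  l2norm N (fun j => f j + g j) <= l2norm N f + l2norm N g.
Proof.
rewrite !l2E.
set A := ss N f; set B := ss N g.
have hA : 0 <= A by exact: ss_ge0.
have hB : 0 <= B by exact: ss_ge0.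
set P := \sum_(1 <= j < N.+1) nc (f j) * nc (g j).
have hP : 0 <= P by apply: sumr_ge0 => j _; apply: mulr_ge0; exact: nc_ge0.
have hPle : P <= Num.sqrt A * Num.sqrt B.
  rewrite -(ger0_norm hP) -sqrtr_sqr -sqrtrM // ler_sqrt ?mulr_ge0 //.
  exact: cs_ineq.
have h1 : ss N (fun j => f j + g j) <= A + B + 2 * P.
  rewrite /ss /A /B /ss /P mulr_sumr -!big_split /=.
  apply: ler_sum => j _.
  have h := nc_add (f j) (g j).
  have h0 : 0 <= nc (f j + g j) by exact: nc_ge0.
  have h2 : nc (f j + g j) ^+ 2 <= (nc (f j) + nc (g j)) ^+ 2.
    by rewrite ler_pXn2r // ?nnegrE // addr_ge0 // nc_ge0.
  apply: le_trans h2 _; rewrite le_eqVlt; apply/orP; left; apply/eqP; ring.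
have h2 : A + B + 2 * P <= (Num.sqrt A + Num.sqrt B) ^+ 2.
  have -> : (Num.sqrt A + Num.sqrt B) ^+ 2 =
     Num.sqrt A ^+ 2 + Num.sqrt B ^+ 2 + 2 * (Num.sqrt A * Num.sqrt B) by ring.
  rewrite !sqr_sqrtr //; rewrite lerD2l; rewrite ler_pM2l //.
rewrite -(ger0_norm (addr_ge0 (sqrtr_ge0 A) (sqrtr_ge0 B))) -sqrtr_sqr.
rewrite ler_sqrt ?sqr_ge0 //; exact: le_trans h1 h2.
Qed.

Lemma l2_sum N (I : Type) (r : seq I) (F : I -> nat -> C) :
  l2norm N (fun j => \sum_(i <- r) F i j) <= \sum_(i <- r) l2norm N (F i).
Proof.
elim: r => [|a r IH].
  rewrite big_nil; under eq_fun do rewrite big_nil; by rewrite l2_zero.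
rewrite big_cons; under eq_fun do rewrite big_cons.
apply: le_trans (l2_add _ _ _) _; exact: lerD.
Qed.

End Helpers.
Arguments ss {R}.


Section Core.
Variable R : realType.
Local Notation C := R[i].
Local Open Scope complex_scope.
Local Notation nc := (@ComplexField.Normc.normc R).
Variables (m : nat) (z : nat -> C).

Let t j : C := \sum_(j <= k < m.+2) z k.
Let Y j : C := \sum_(j <= k < m.+1) ((m.+1 - k)%:R : C) * (z k - z k.+1).
Let w j : C := t j / ((m.+2 - j)%:R : C).

Lemma tS j : (j <= m.+1)%N -> t j = z j + t j.+1.
Proof. by move=> hj; rewrite /t big_ltn. Qed.

Lemma Yt j : (j <= m.+1)%N ->
  Y j = (m.+1 - j)%:R * t j - (m.+2 - j)%:R * t j.+1.
Proof.
move=> hj; have [i hi] : exists i, (j + i = m.+1)%N by exists (m.+1 - j)%N; lia.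
elim: i j hj hi => [|i IH] j hj hi.
  rewrite addn0 in hi; subst j.
  rewrite /Y big_geq // subnn mul0r subSnn mul1r /t (big_geq (leqnn m.+2)).
  by rewrite subrr.
have hjm : (j <= m)%N by lia.
rewrite /Y big_ltn; last by lia.
rewrite -/(Y j.+1) IH; [|lia|lia].
rewrite (tS _ hj) (tS j.+1); last by lia.
rewrite !subSS (subSn hjm) (subSn (_ : (j <= m.+1)%N)) ?(subSn hjm) //.
rewrite -!natr1; ring.
Qed.

Lemma tw j : (j <= m.+1)%N -> t j = (m.+2 - j)%:R * w j.
Proof.
move=> hj; rewrite /w mulrC divfK //.
by rewrite pnatr_eq0; lia.
Qed.

Lemma tw1 j : (j <= m.+1)%N -> t j.+1 = (m.+1 - j)%:R * w j.+1.
Proof.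
move=> hj; case: (ltnP j m.+1) => h.
  by rewrite tw // subSS.
have -> : j = m.+1 by lia.
by rewrite subnn mul0r /t big_geq.
Qed.


Lemma zw j : (j <= m)%N -> z j = ((m.+2 - j)%:R : C) * w j - (m.+1 - j)%:R * w j.+1.
Proof.
move=> hj; have := tS j (leqW hj).
rewrite tw ?(leqW hj) // tw1 ?(leqW hj) // => ->; ring.
Qed.

Lemma zlast : z m.+1 = w m.+1.
Proof.
have := tS m.+1 (leqnn _); rewrite tw // /t (big_geq (leqnn m.+2)) addr0 => <-.
by rewrite subSnn mul1r.
Qed.

Lemma nc_z j : (j <= m)%N -> nc (z j) ^+ 2 =
   (m.+2 - j)%:R * nc (w j) ^+ 2 - (m.+1 - j)%:R * nc (w j.+1) ^+ 2
   + ((m.+1 - j) * (m.+2 - j))%:R * nc (w j - w j.+1) ^+ 2.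
Proof.
move=> hj.
have e0 : (m.+2 - j = (m.+1 - j).+1)%N by rewrite subSn //; lia.
have e1 : ((m.+2 - j)%:R : C) = (((m.+1 - j)%:R + 1 : R))%:C by rewrite e0 natr1 natC.
have e2 : ((m.+1 - j)%:R : C) = ((m.+1 - j)%:R : R)%:C by rewrite natC.
by rewrite zw // e1 e2 nc_identity natrM e0 -natr1.
Qed.

Lemma tele (f : nat -> R) a b : (a <= b)%N ->
  \sum_(a <= k < b) (f k - f k.+1) = f a - f b.
Proof.
move=> ab; rewrite -opprB -(telescope_sumr _ ab) -sumrN.
by apply: eq_bigr => k _; rewrite opprB.
Qed.

Lemma zsum : \sum_(1 <= j < m.+2) nc (z j) ^+ 2 =
  m.+1%:R * nc (w 1) ^+ 2 +
  \sum_(1 <= j < m.+1) ((m.+1 - j) * (m.+2 - j))%:R * nc (w j - w j.+1) ^+ 2.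
Proof.
rewrite big_nat_recr //= zlast.
pose v j := (m.+2 - j)%:R * nc (w j) ^+ 2.
have -> : \sum_(1 <= j < m.+1) nc (z j) ^+ 2 = \sum_(1 <= j < m.+1)
   ((v j - v j.+1) + ((m.+1 - j) * (m.+2 - j))%:R * nc (w j - w j.+1) ^+ 2).
  apply: eq_big_nat => j /andP[_ hj]; rewrite nc_z //.
rewrite big_split /= (tele v) // /v subSnn mul1r.
have -> : (m.+2 - 1 = m.+1)%N by lia.
ring.
Qed.

Lemma core : \sum_(1 <= j < m.+1) nc (Y j) ^+ 2 <=
  (m * m.+1)%:R * \sum_(1 <= j < m.+2) nc (z j) ^+ 2.
Proof.
rewrite zsum mulrDr.
have hY : forall j, (1 <= j <= m)%N ->
    Y j = ((m.+1 - j) * (m.+2 - j))%:R * (w j - w j.+1).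
  move=> j /andP[j1 jm]; rewrite Yt; last by lia.
  rewrite tw; last by lia.
  rewrite tw1; last by lia.
  rewrite natrM; ring.
apply: le_trans (_ : _ <= (m * m.+1)%:R *
   \sum_(1 <= j < m.+1) ((m.+1 - j) * (m.+2 - j))%:R * nc (w j - w j.+1) ^+ 2) _.
  rewrite mulr_sumr; apply: ler_sum_nat => j /andP[j1 jm].
  rewrite hY; last by lia.
  rewrite nc_mul nc_nat exprMn expr2 -mulrA.
  apply: ler_wpM2r; first by apply: mulr_ge0; [exact: ler0n | exact: sqr_ge0].
  rewrite ler_nat; apply: leq_mul; lia.
apply: ler_wpDl; last exact: lexx.
apply: mulr_ge0; first exact: ler0n.
by apply: mulr_ge0; [exact: ler0n | exact: sqr_ge0].
Qed.

End Core.


Section TcLemmas.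
Variable R : realType.
Local Notation C := R[i].
Local Open Scope complex_scope.
Local Notation nc := (@ComplexField.Normc.normc R).

Definition xt (N : nat) (x : nat -> C) (k : nat) : C := if (k <= N)%N then x k else 0.

Lemma sum_ext0 (V : zmodType) (F : nat -> V) a b b' : (b <= b')%N ->
  (forall k, (b <= k < b')%N -> F k = 0) ->
  \sum_(a <= k < b) F k = \sum_(a <= k < b') F k.
Proof.
move=> bb' H; case: (leqP a b) => ab.
  by rewrite (big_cat_nat ab bb') /= [X in _ + X]big1_seq ?addr0 //
     => k /andP[_]; rewrite mem_index_iota => /H.
rewrite big_geq ?(ltnW ab) // big1_seq // => k /andP[_].
by rewrite mem_index_iota => /andP[ak kb']; apply: H; rewrite kb' andbT; lia.
Qed.

Lemma sum_le_ext (F : nat -> R) a b b' : (a <= b <= b')%N ->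
  (forall k, 0 <= F k) ->
  \sum_(a <= k < b) F k <= \sum_(a <= k < b') F k.
Proof.
move=> /andP[ab bb'] H; rewrite (big_cat_nat ab bb') /= lerDl.
by apply: sumr_ge0 => k _.
Qed.

Lemma teleV (V : zmodType) (f : nat -> V) a b : (a <= b)%N ->
  \sum_(a <= k < b) (f k - f k.+1) = f a - f b.
Proof.
move=> ab; rewrite -opprB -(telescope_sumr _ ab) -sumrN.
by apply: eq_bigr => k _; rewrite opprB.
Qed.

Lemma Tc_row (c : nat -> C) N x j : (1 <= j <= N)%N ->
  Tc_apply c N x j = c j * x j + \sum_(j.+1 <= k < N.+1) (c k - c k.-1) * x k.
Proof.
move=> /andP[j1 jN].
rewrite /Tc_apply (big_cat_nat j1 (_ : (j <= N.+1)%N)) /=; last by lia.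
rewrite big_nat_cond big1 ?add0r; last first.
  move=> k /andP[/andP[_ hk] _]; rewrite /Tc.
  have -> : (j == k) = false by apply/eqP; lia.
  have -> : (j < k)%N = false by lia.
  by rewrite mul0r.
rewrite big_ltn; last by lia.
rewrite /Tc eqxx; congr (_ + _).
apply: eq_big_nat => k /andP[hk _].
have -> : (j == k) = false by apply/eqP; lia.
by rewrite hk.
Qed.

Lemma Tc_sbp (c : nat -> C) N x j : (1 <= j <= N)%N ->
  Tc_apply c N x j = \sum_(j <= k < N.+1) c k * (xt N x k - xt N x k.+1).
Proof.
move=> hj; rewrite Tc_row //.
case/andP: hj => _ hj.
have [i hi] : exists i, (j + i = N)%N by exists (N - j)%N; lia.
elim: i j hj hi => [|i IH] j hj hi.
  rewrite addn0 in hi; subst j.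
  rewrite big_geq // big_ltn // big_geq // /xt leqnn ltnn; ring.
rewrite big_ltn; last by lia.
rewrite [in RHS]big_ltn; last by lia.
have := IH j.+1; rewrite /=.
move=> IH'; have {}IH' := IH' (_ : (j.+1 <= N)%N) (_ : (j.+1 + i = N)%N).
have e : \sum_(j.+2 <= k < N.+1) (c k - c k.-1) * x k =
   \sum_(j.+1 <= k < N.+1) c k * (xt N x k - xt N x k.+1) - c j.+1 * x j.+1.
  rewrite -IH'; [ring | lia | lia].
rewrite e /xt.
have -> : (j <= N)%N by lia.
have -> : (j.+1 <= N)%N by lia.
ring.
Qed.


Definition phi (m : nat) (k : nat) : C := ((m.+1 - k)%N)%:R.

Lemma Tc_one N x j : (1 <= j <= N)%N -> Tc_apply (fun _ => (1 : C)) N x j = x j.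
Proof.
move=> hj; rewrite Tc_sbp //.
under eq_bigr do rewrite mul1r.
rewrite teleV; last by case/andP: hj; lia.
by rewrite /xt; case/andP: hj => _ ->; rewrite ltnn subr0.
Qed.

Lemma l2_Tc_one N x : l2norm N (Tc_apply (fun _ => (1 : C)) N x) = l2norm N x.
Proof. by apply: l2_ext => j hj; rewrite Tc_one. Qed.

Lemma phi_bound m N (x : nat -> C) :
  l2norm N (Tc_apply (phi m) N x) <= Num.sqrt ((m * m.+1)%:R) * l2norm N x.
Proof.
pose x' := xt N x.
pose z k := if (k <= m.+1)%N then x' k else 0.
pose Yz j := \sum_(j <= k < m.+1) ((m.+1 - k)%:R : C) * (z k - z k.+1).
have hT : forall j, (1 <= j <= N)%N -> Tc_apply (phi m) N x j = Yz j.
  move=> j hj; rewrite Tc_sbp //.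
  rewrite (@sum_ext0 _ _ _ N.+1 (N + m).+2); last 2 first.
  - lia.
  - move=> k hk; rewrite /xt.
    have -> : (k <= N)%N = false by lia.
    have -> : (k.+1 <= N)%N = false by lia.
    by rewrite subrr mulr0.
  rewrite /Yz (@sum_ext0 _ _ _ m.+1 (N + m).+2); last 2 first.
  - lia.
  - move=> k hk.
    have -> : (m.+1 - k = 0)%N by lia.
    by rewrite mul0r.
  apply: eq_big_nat => k hk.
  rewrite /phi /z.
  case: (leqP k m) => km.
    have -> : (k <= m.+1)%N by lia.
    by have -> : (k.+1 <= m.+1)%N by lia.
  have -> : (m.+1 - k = 0)%N by lia.
  by rewrite !mul0r.
have h1 : ss N (Tc_apply (phi m) N x) <= \sum_(1 <= j < m.+1) nc (Yz j) ^+ 2.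
  rewrite /ss (@eq_big_nat _ _ _ _ _ _ (fun j => nc (Yz j) ^+ 2)); last first.
    by move=> j hj; rewrite hT //; lia.
  apply: le_trans (@sum_le_ext _ 1 N.+1 (N + m).+2 _ _) _.
  - lia.
  - by move=> k; apply: sqr_ge0.
  rewrite [X in _ <= X](@sum_ext0 _ _ _ m.+1 (N + m).+2); first exact: lexx.
  - lia.
  - move=> k hk; rewrite /Yz big_geq; last by lia.
    by rewrite nc0 expr0n.
have h2 : \sum_(1 <= j < m.+1) nc (Yz j) ^+ 2 <=
   (m * m.+1)%:R * \sum_(1 <= j < m.+2) nc (z j) ^+ 2.
  exact: core.
have h3 : \sum_(1 <= j < m.+2) nc (z j) ^+ 2 <= ss N x.
  rewrite (@sum_ext0 _ _ _ m.+2 (N + m).+2); last 2 first.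
  - lia.
  - move=> k hk; rewrite /z.
    have -> : (k <= m.+1)%N = false by lia.
    by rewrite nc0 expr0n.
  apply: le_trans (_ : _ <= \sum_(1 <= j < (N + m).+2) nc (x' j) ^+ 2) _.
    apply: ler_sum_nat => k _; rewrite /z.
    case: (k <= m.+1)%N; first exact: lexx.
    by rewrite nc0 expr0n; apply: sqr_ge0.
  rewrite -(@sum_ext0 _ _ _ N.+1 (N + m).+2); last 2 first.
  - lia.
  - move=> k hk; rewrite /x' /xt.
    have -> : (k <= N)%N = false by lia.
    by rewrite nc0 expr0n.
  rewrite /ss; apply: ler_sum_nat => k hk.
  rewrite /x' /xt; have -> : (k <= N)%N by lia.
  exact: lexx.
rewrite !l2E -sqrtrM; last exact: ler0n.
rewrite ler_sqrt; last by apply: mulr_ge0; [exact: ler0n | exact: ss_ge0].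
apply: le_trans h1 _; apply: le_trans h2 _.
by apply: ler_wpM2l; [exact: ler0n | exact: h3].
Qed.

End TcLemmas.


Section Main.
Variable R : realType.
Local Notation C := R[i].
Local Open Scope complex_scope.
Local Notation nc := (@ComplexField.Normc.normc R).
Local Notation phi := (@phi R).

Lemma decomp (c : nat -> C) K k : (1 <= k <= K.+1)%N ->
  c k = c K.+1 - (c K.+2 - c K.+1) * phi K k +
        \sum_(1 <= m < K.+1) (c m.+2 - 2 * c m.+1 + c m) * phi m k.
Proof.
elim: K k => [|K IH] k hk.
  have -> : k = 1%N by lia.
  rewrite big_geq // /phi subnn mulr0 subr0.
  by rewrite addr0.
case: (ltnP k K.+2) => hk'.
  have hk2 : (1 <= k <= K.+1)%N by lia.
  rewrite {1}(IH k hk2).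
  rewrite [in RHS]big_nat_recr //=.
  rewrite /phi (subSn (_ : (k <= K.+1)%N)); last by lia.
  rewrite -[((K.+1 - k).+1)%:R]natr1; ring.
have -> : k = K.+2 by lia.
rewrite /phi subnn mulr0 subr0 big_nat_cond big1 ?addr0 //.
move=> m /andP[/andP[_ hm] _].
have -> : (m.+1 - K.+2 = 0)%N by lia.
by rewrite mulr0.
Qed.

Lemma Tc_congr (c c' : nat -> C) N x j : (forall k, (1 <= k <= N)%N -> c k = c' k) ->
  (1 <= j <= N)%N -> Tc_apply c N x j = Tc_apply c' N x j.
Proof.
move=> H hj; rewrite !Tc_sbp //; apply: eq_big_nat => k hk.
by rewrite H //; lia.
Qed.

Lemma Tc_lin (a b : C) (f g : nat -> C) (I : Type) (r : seq I) (e : I -> C)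
   (h : I -> nat -> C) N x j : (1 <= j <= N)%N ->
  Tc_apply (fun k => a * f k + b * g k + \sum_(i <- r) e i * h i k) N x j =
  a * Tc_apply f N x j + b * Tc_apply g N x j +
  \sum_(i <- r) e i * Tc_apply (h i) N x j.
Proof.
move=> hj; rewrite !Tc_sbp //.
set D := fun k => xt R N x k - xt R N x k.+1.
have E : \sum_(i <- r) e i * Tc_apply (h i) N x j =
    \sum_(j <= k < N.+1) \sum_(i <- r) e i * (h i k * D k).
  rewrite exchange_big /=; apply: eq_bigr => i _.
  by rewrite Tc_sbp // mulr_sumr.
rewrite E !mulr_sumr -!big_split /=.
apply: eq_bigr => k _.
rewrite /D !mulrDl big_distrl /= !mulrA; congr (_ + _ + _).
by apply: eq_bigr => i _; rewrite mulrA.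
Qed.

Definition rho (m : nat) : R := Num.sqrt ((m * m.+1)%:R).

Lemma finite_bound (c : nat -> C) N x K : (N <= K.+1)%N ->
  l2norm N (Tc_apply c N x) <=
  (nc (c K.+1) + nc (c K.+2 - c K.+1) * rho K +
   \sum_(1 <= m < K.+1) rho m * nc (c m.+2 - 2 * c m.+1 + c m)) * l2norm N x.
Proof.
move=> NK.
set e := c K.+2 - c K.+1.
rewrite (@l2_ext _ N _ (fun j => c K.+1 * Tc_apply (fun _ => 1) N x j
   + (- e) * Tc_apply (phi K) N x j
   + \sum_(1 <= m < K.+1) (c m.+2 - 2 * c m.+1 + c m) * Tc_apply (phi m) N x j)); last first.
  move=> j hj; rewrite -Tc_lin //; apply: Tc_congr => // k hk.
  rewrite mulr1 mulNr; apply: decomp; lia.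
apply: le_trans (l2_add _ _ _ _) _.
apply: le_trans (lerD (l2_add _ _ _ _) (l2_sum _ _ _ _ _)) _.
rewrite !l2_scale l2_Tc_one nc_opp.
rewrite !mulrDl big_distrl /=.
apply: lerD; first apply: lerD.
- exact: lexx.
- rewrite -mulrA; apply: ler_wpM2l; first exact: nc_ge0.
  exact: phi_bound.
- apply: ler_sum => m _; rewrite l2_scale.
  rewrite [rho m * _]mulrC -mulrA; apply: ler_wpM2l; first exact: nc_ge0.
  exact: phi_bound.
Qed.

End Main.


Section Final.
Variable R : realType.
Local Notation C := R[i].
Local Notation nc := (@ComplexField.Normc.normc R).
Local Notation rho := (@rho R).

Lemma rho_ge m : (m%:R : R) <= rho m.
Proof.
rewrite /rho -(ger0_norm (ler0n _ m)) -sqrtr_sqr ler_sqrt ?ler0n //.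
by rewrite -natrX ler_nat expnS expn1 leq_mul.
Qed.

Lemma rho_le m : rho m <= m.+1%:R.
Proof.
rewrite /rho -(ger0_norm (ler0n _ m.+1)) -sqrtr_sqr ler_sqrt; last first.
  by rewrite -natrX ler0n.
by rewrite -natrX ler_nat expnS expn1 leq_mul.
Qed.

Lemma e_bound (c : nat -> C) K M : (K.+1 <= M)%N ->
  K.+1%:R * nc (c K.+2 - c K.+1) <= K.+1%:R * nc (c M.+1 - c M) +
   \sum_(K.+1 <= m < M) rho m * nc (c m.+2 - 2 * c m.+1 + c m).
Proof.
move=> KM.
have E : c K.+2 - c K.+1 = (c M.+1 - c M) -
   \sum_(K.+1 <= m < M) (c m.+2 - 2 * c m.+1 + c m).
  have := @telescope_sumr _ K.+1 M (fun m => c m.+1 - c m) KM.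
  have -> : \sum_(K.+1 <= k < M) ((c k.+2 - c k.+1) - (c k.+1 - c k)) =
            \sum_(K.+1 <= m < M) (c m.+2 - 2 * c m.+1 + c m).
    by apply: eq_bigr => m _; ring.
  move=> ->; ring.
rewrite E.
apply: le_trans (_ : _ <= K.+1%:R * (nc (c M.+1 - c M) +
   \sum_(K.+1 <= m < M) nc (c m.+2 - 2 * c m.+1 + c m))) _.
  apply: ler_wpM2l; first exact: ler0n.
  apply: le_trans (nc_sub _ _ _) _; apply: lerD; first exact: lexx.
  exact: nc_sum.
rewrite mulrDr; apply: lerD; first exact: lexx.
rewrite mulr_sumr; apply: ler_sum_nat => m /andP[hm _].
apply: ler_wpM2r; first exact: nc_ge0.
apply: le_trans (rho_ge m); by rewrite ler_nat.
Qed.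

Lemma combined_bound (c : nat -> C) N x K M : (N <= K.+1)%N -> (K.+1 <= M)%N ->
  l2norm N (Tc_apply c N x) <=
  (nc (c K.+1) + K.+1%:R * nc (c M.+1 - c M) +
   \sum_(1 <= m < M) rho m * nc (c m.+2 - 2 * c m.+1 + c m)) * l2norm N x.
Proof.
move=> NK KM.
apply: le_trans (@finite_bound R c N x K NK) _.
apply: ler_wpM2r; first exact: l2_ge0.
rewrite (big_cat_nat (_ : (1 <= K.+1)%N) KM) //=.
rewrite -addrA -addrA lerD2l addrA [X in _ <= X]addrC addrA lerD2r.
apply: le_trans (_ : _ <= K.+1%:R * nc (c K.+2 - c K.+1)) _.
  rewrite mulrC; apply: ler_wpM2r; first exact: nc_ge0.
  exact: rho_le.
rewrite addrC; exact: (@e_bound c K M KM).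
Qed.

End Final.

Lemma cvg_extract (R : realType) (u : nat -> R) : u @ \oo --> (0:R) ->
  forall e : R, 0 < e -> exists K, forall n, (K <= n)%N -> `|u n| < e.
Proof.
move=> /cvgrPdist_lt H e he.
have [K _ HK] := H e he.
exists K => n Kn. have := HK n Kn. by rewrite sub0r normrN.
Qed.

Theorem theorem2 (R : realType) (c : nat -> R[i]) :
  (fun k => ComplexField.Normc.normc (c k)) @ \oo --> (0 : R) ->
  (Tc_opnorm c <=
    \sum_(1 <= k <oo)
      ((Num.sqrt ((k * k.+1)%:R : R)) * ComplexField.Normc.normc (c k.+2 - 2 * c k.+1 + c k))%:E)%E.
Proof.
move=> hc.
have hc' := @cvg_extract R _ hc.
apply: ge_ereal_sup => _ [N [x [hx ->]]].
apply/lee_addgt0Pr => eps heps.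
have he2 : 0 < eps / 2 by rewrite divr_gt0.
have [K0 HK0] := hc' _ he2.
pose K := maxn N K0.
have NK : (N <= K.+1)%N by rewrite /K; lia.
have hcK : ComplexField.Normc.normc (c K.+1) < eps / 2.
  have hK0 : (K0 <= K.+1)%N by rewrite /K; lia.
  have := HK0 K.+1 hK0.
  by rewrite ger0_norm // nc_ge0.
have hd : 0 < eps / (4 * K.+1%:R) by rewrite divr_gt0 // mulr_gt0.
have [K1 HK1] := hc' _ hd.
pose M := maxn K.+1 K1.
have KM : (K.+1 <= M)%N by rewrite /M; lia.
have hM : K.+1%:R * ComplexField.Normc.normc (c M.+1 - c M) <= eps / 2.
  have hK1 : (K1 <= M)%N by rewrite /M; lia.
  have h1 := HK1 M.+1 (leqW hK1).
  have h2 := HK1 M hK1.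
  rewrite ger0_norm ?nc_ge0 // in h1; rewrite ger0_norm ?nc_ge0 // in h2.
  apply: le_trans (_ : _ <= K.+1%:R * (2 * (eps / (4 * K.+1%:R)))) _.
    apply: ler_wpM2l; first exact: ler0n.
    apply: le_trans (nc_sub _ _ _) _.
    rewrite mulr2n mulrDl mul1r; apply: lerD; exact: ltW.
  rewrite le_eqVlt; apply/orP; left; apply/eqP; field.
  by rewrite addrC natr1 pnatr_eq0.
have hl : 0 < l2norm N x by rewrite lt_def hx l2_ge0.
have B := @combined_bound R c N x K M NK KM.
set P := \sum_(1 <= m < M) _ in B.
have hP : (P%:E <= \sum_(1 <= k <oo)
      ((Num.sqrt ((k * k.+1)%:R : R)) * ComplexField.Normc.normc (c k.+2 - 2 * c k.+1 + c k))%:E)%E.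
  rewrite /P -sumEFin; apply: nneseries_lim_ge => n _ _.
  by rewrite lee_fin; apply: mulr_ge0; [exact: sqrtr_ge0 | exact: nc_ge0].
apply: le_trans (_ : _ <= (P + eps)%:E)%E _.
  rewrite lee_fin ler_pdivrMr //.
  apply: le_trans B _; apply: ler_wpM2r; first exact: ltW.
  apply: le_trans (lerD (lerD (ltW hcK) hM) (lexx P)) _.
  by rewrite le_eqVlt; apply/orP; left; apply/eqP; field.
rewrite EFinD; exact: leeD2r.
Qed.
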